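(* Let $G$ be a finite group and let $M,N$ be normal subgroups with $1<M\le N<G$ such that every $g\in G\setminus N$ is conjugate in $G$ to every element of $gM$. If $G/N$ is not a $p$-group for any prime $p$, then $M\cap Z(G)=\{1\}$. *)

(* Defs.v *)
From mathcomp Require Import all_boot all_order all_fingroup all_solvable.

(* Main.v *)
Require Import Defs.
From mathcomp Require Import all_boot all_order all_fingroup all_solvable.
Import GroupScope.

Theorem mainTheorem13 (gT : finGroupType) (G M N : {group gT}) :
  M <| G -> N <| G ->
  M :!=: 1 -> M \subset N -> N \proper G ->
  (forall g, g \in G :\: N -> forall m, m \in M -> g * m \in g ^: G) ->
  ~ (exists p : nat, prime p /\ p.-group (G / N)) ->
  M :&: 'Z(G) = 1.
Proof.
move=> nMG nNG ntM sMN prNG Hconj HnotP.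
apply/eqP; apply/negPn/negP => /trivgPn [z /setIP [Mz Zz] nz].
set q := pdiv #[z].
have qpr : prime q by rewrite pdiv_prime // order_gt1.
have ntz' : z.`_q != 1.
  apply/negP => /eqP /constt1P H.
  have : q \in \pi(#[z]) by rewrite pi_pdiv order_gt1.
  by move/(pnatPpi H); rewrite !inE eqxx.
have Mz' : z.`_q \in M.
  by move: (cycle_constt q z); apply/subsetP; rewrite cycle_subG.
have Zz' : z.`_q \in 'Z(G).
  by move: (cycle_constt q z); apply/subsetP; rewrite cycle_subG.
have [X GX nqX] : exists2 X, X \in G / N & ~~ q.-elt X.
  case: (boolP [exists X in G / N, ~~ q.-elt X]) => [/exists_inP[X GX nq] | /exists_inPn H].
    by exists X.
  exfalso; apply: HnotP; exists q; split => //; apply/pgroupP => p pp pd.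
  have [Y GY oY] := Cauchy pp pd.
  by have := H Y GY; rewrite negbK /p_elt oY pnatE.
case/morphimP: GX => x Nx Gx defX.
set x' := x.`_q^'.
have Gx' : x' \in G by rewrite groupX.
have x'N : x' \notin N.
  apply/negP => Nx'.
  have : coset N x' = 1 by rewrite coset_id.
  rewrite /x' (morph_constt (coset_morphism N)) //= -defX => /constt1P.
  by rewrite p_eltNK (negbTE nqX).
have GNx' : x' \in G :\: N by rewrite inE x'N Gx'.
have /imsetP [y Gy Hy] := Hconj x' GNx' _ Mz'.
have qx' : q^'.-elt x' by apply: p_elt_constt.
have cxz : commute x' z.`_q.
  by have [_ cz] := centerP _ _ Zz'; apply/esym/cz.
have := congr1 (fun t => t.`_q) Hy => /=.
rewrite consttM // consttJ.
have -> : x'.`_q = 1 by apply/constt1P.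
rewrite conj1g mul1g constt_p_elt ?p_elt_constt // => E.
by rewrite E eqxx in ntz'.
Qed.
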